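(* Let $(\mathcal A,\mathcal T,(-),\preceq)$ be a $\mathcal T$-system such that $(\mathcal A,\mathcal T,(-))$ is a meta-tangible $\mathcal T$-monoid module triple and $\mathcal A$ has height $2$. Then the system is strongly negated: for all $c,d\in\mathcal A$ with $\mathbb 0\preceq c+d$, either ($\mathbb 0\preceq c$ and $\mathbb 0\preceq d$), or $(-)c\preceq d$, or $(-)d\preceq c$.
   Context: $(\mathcal A,+,\mathbb 0)$ commutative monoid, $\mathcal T\subseteq\mathcal A\setminus\{\mathbb 0\}$. A negation map is $(-):\mathcal A\to\mathcal A$ with $(-)(b_1+b_2)=(-)b_1+(-)b_2$, $(-)((-)b)=b$, $(-)\mathbb 0=\mathbb 0$, $(-)\mathcal T\subseteq\mathcal T$. Write $b(-)c:=b+((-)c)$, $b^\circ:=b(-)b$, $\mathcal A^\circ=\{b^\circ:b\in\mathcal A\}$. A $\mathcal T$-triple $(\mathcal A,\mathcal T,(-))$: such data with an action $\mathcal T\times\mathcal A\to\mathcal A$ satisfying $a(b_1+b_2)=ab_1+ab_2$, $a\mathbb 0=\mathbb 0$, $(-)(ab)=((-)a)b=a((-)b)$, with $\mathcal T\cap\mathcal A^\circ=\emptyset$ and every element of $\mathcal A$ a finite sum of elements of $\mathcal T$. It is a $\mathcal T$-monoid module triple if moreover $\mathcal T$ is a monoid with identity $\mathbb 1$ whose multiplication is the restriction of the action, $\mathbb 1b=b$ and $(a_1a_2)b=a_1(a_2b)$. Meta-tangible: $a+b\in\mathcal T$ for all $a,b\in\mathcal T$ with $b\neq(-)a$. A $\mathcal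 T$-surpassing relation $\preceq$ is a reflexive transitive relation on $\mathcal A$ with: (i) $b\preceq b+c^\circ$ for all $b,c$; (ii) $b_1\preceq b_2\Rightarrow(-)b_1\preceq(-)b_2$; (iii) $b_1\preceq b_2,\ b_1'\preceq b_2'\Rightarrow b_1+b_1'\preceq b_2+b_2'$; (iv) $a\in\mathcal T$, $b_1\preceq b_2\Rightarrow ab_1\preceq ab_2$; (v) $a\preceq b$ with $a,b\in\mathcal T$ implies $a=b$; (vi) $b^\circ\not\preceq a$ for all $b\in\mathcal A$, $a\in\mathcal T$. A $\mathcal T$-system is $(\mathcal A,\mathcal T,(-),\preceq)$ with $(\mathcal A,\mathcal T,(-))$ a $\mathcal T$-triple, $\preceq$ a $\mathcal T$-surpassing relation, and such that $\mathbb 0\preceq a+b$ with $a,b\in\mathcal T$ implies $b=(-)a$. Height of $c$: least $t$ with $c=\sum_{i=1}^ta_i$, $a_i\in\mathcal T$; height of $\mathcal A$: supremum over its elements. *)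

(* Defs.v *)
From Stdlib Require Import List Arith.
Import ListNotations.

(* Data of a T-system: carrier A, zero, addition, the tangible subset T
   (as a predicate), negation map, action T x A -> A (total function whose
   values matter only for tangible first argument), the unit 1 of T
   (used for monoid module triples), and the surpassing relation. *)
Record sysdata := {
  car : Type;
  zero : car;
  add : car -> car -> car;
  tang : car -> Prop;
  neg : car -> car;
  act : car -> car -> car;
  one : car;
  sur : car -> car -> Prop
}.

Section Defs.
Variable S : sysdata.
Local Notation A := (car S).
Local Notation "x + y" := (add S x y).
Local Notation "0" := (zero S).

Definition circ (b : A) : A := b + neg S b.

Definition sumlist (l : list A) : A := fold_right (add S) 0 l.

Definition sum_of_tang (c : A) (t : nat) : Prop :=
  exists l : list A, length l = t /\ Forall (tang S) l /\ c = sumlist l.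

Definition has_height (c : A) (t : nat) : Prop :=
  sum_of_tang c t /\ forall s, sum_of_tang c s -> t <= s.

Definition height_A (n : nat) : Prop :=
  (forall c t, has_height c t -> t <= n) /\ (exists c, has_height c n).

Definition comm_monoid : Prop :=
  (forall x y z, x + (y + z) = (x + y) + z) /\
  (forall x y, x + y = y + x) /\
  (forall x, 0 + x = x).

Definition negation_map : Prop :=
  (forall b1 b2, neg S (b1 + b2) = neg S b1 + neg S b2) /\
  (forall b, neg S (neg S b) = b) /\
  neg S 0 = 0 /\
  (forall a, tang S a -> tang S (neg S a)).

Definition T_triple : Prop :=
  comm_monoid /\
  (forall a, tang S a -> a <> 0) /\
  negation_map /\
  (forall a b1 b2, tang S a -> act S a (b1 + b2) = act S a b1 + act S a b2) /\
  (forall a, tang S a -> act S a 0 = 0) /\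
  (forall a b, tang S a ->
     neg S (act S a b) = act S (neg S a) b /\
     neg S (act S a b) = act S a (neg S b)) /\
  (forall a b, tang S a -> a <> circ b) /\
  (forall c : A, exists l : list A, Forall (tang S) l /\ c = sumlist l).

Definition T_monoid_module_triple : Prop :=
  T_triple /\
  tang S (one S) /\
  (forall a1 a2, tang S a1 -> tang S a2 -> tang S (act S a1 a2)) /\
  (forall a, tang S a -> act S a (one S) = a) /\
  (forall b, act S (one S) b = b) /\
  (forall a1 a2 b, tang S a1 -> tang S a2 ->
     act S (act S a1 a2) b = act S a1 (act S a2 b)).

Definition meta_tangible : Prop :=
  forall a b, tang S a -> tang S b -> b <> neg S a -> tang S (a + b).

Definition T_surpassing : Prop :=
  (forall b, sur S b b) /\
  (forall b1 b2 b3, sur S b1 b2 -> sur S b2 b3 -> sur S b1 b3) /\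
  (forall b c, sur S b (b + circ c)) /\
  (forall b1 b2, sur S b1 b2 -> sur S (neg S b1) (neg S b2)) /\
  (forall b1 b2 b1' b2', sur S b1 b2 -> sur S b1' b2' ->
     sur S (b1 + b1') (b2 + b2')) /\
  (forall a b1 b2, tang S a -> sur S b1 b2 -> sur S (act S a b1) (act S a b2)) /\
  (forall a b, tang S a -> tang S b -> sur S a b -> a = b) /\
  (forall b a, tang S a -> ~ sur S (circ b) a).

Definition T_system : Prop :=
  T_triple /\ T_surpassing /\
  (forall a b, tang S a -> tang S b -> sur S 0 (a + b) -> b = neg S a).

Definition strongly_negated : Prop :=
  forall c d, sur S 0 (c + d) ->
    (sur S 0 c /\ sur S 0 d) \/ sur S (neg S c) d \/ sur S (neg S d) c.

End Defs.

(* Main.v *)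
Require Import Defs.
From Stdlib Require Import List Arith Lia Classical.
Import ListNotations.

Local Notation "x +' y" := (add _ x y) (at level 50, left associativity).

Lemma decomp (S : sysdata) :
  T_triple S -> height_A S 2 ->
  forall c, c = zero S \/ tang S c \/
    exists p q, tang S p /\ tang S q /\ c = p +' q.
Proof.
  intros [[Hassoc [Hcomm Hzl]] [_ [_ [_ [_ [_ [_ Hgen]]]]]]] [Hh _] c.
  assert (H : forall n, forall c, sum_of_tang S c n ->
            exists l, length l <= 2 /\ Forall (tang S) l /\ c = sumlist S l).
  { induction n as [n IH] using lt_wf_ind. intros c0 Hc.
    destruct (classic (forall s, sum_of_tang S c0 s -> n <= s)) as [Hm|Hm].
    - assert (n <= 2) by (apply (Hh c0 n); split; auto).
      destruct Hc as [l [Hl [Hf He]]]. exists l. split; [lia|auto].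
    - apply not_all_ex_not in Hm. destruct Hm as [s Hs].
      apply imply_to_and in Hs. destruct Hs as [Hs1 Hs2].
      apply (IH s); [lia|auto]. }
  destruct (Hgen c) as [l [Hf He]].
  destruct (H (length l) c) as [l' [Hl [Hf' He']]].
  { exists l; auto. }
  unfold sumlist in *; destruct l' as [|p [|q [|r l']]]; simpl in *.
  - left; auto.
  - right; left. inversion Hf'; subst. rewrite He', Hcomm, Hzl. auto.
  - right; right. inversion Hf'; subst. inversion H3; subst.
    exists p, q. split; auto. split; auto. rewrite He', (Hcomm q), Hzl. auto.
  - lia.
Qed.

Theorem proposition7p41 (S : sysdata) :
  T_system S -> T_monoid_module_triple S -> meta_tangible S -> height_A S 2 ->
  strongly_negated S.
Proof.
  intros Hsys Hmod Hmeta Hh.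
  pose proof (decomp S (proj1 Hsys) Hh) as Hdec.
  destruct Hsys as [Htr [Hsur Hz]].
  destruct Htr as [[Hassoc [Hcomm Hzl]] [Hnz [[Hnadd [Hnn [Hn0 Hnt]]]
    [Hactadd [Hact0 [Hactneg [Hnotcirc Hgen]]]]]]].
  destruct Hmod as [_ [Hone [HmulT [Hact1r [Hact1l Hactassoc]]]]].
  destruct Hsur as [Hrefl [Htrans [Hi [Hnegs [Hadds [Hacts [Hv Hvi]]]]]]].
  assert (Hzr : forall x, x +' zero S = x) by (intro; rewrite Hcomm; auto).
  assert (N0T : forall t, tang S t -> ~ sur S (zero S) t).
  { intros t Ht H. apply (Hvi (zero S) t Ht). unfold circ. rewrite Hn0, Hzl. exact H. }
  assert (Z0c : forall b, sur S (zero S) (circ S b)).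
  { intro b. pose proof (Hi (zero S) b) as H. rewrite Hzl in H. exact H. }
  assert (Hcl : forall c, c = zero S \/ tang S c \/ exists p, tang S p /\ c = circ S p).
  { intro c. destruct (Hdec c) as [?|[?|[p [q [Hp [Hq ->]]]]]]; auto.
    destruct (classic (q = neg S p)) as [->|Hne].
    - right; right; exists p; auto.
    - right; left; apply Hmeta; auto. }
  assert (HL : forall a d, tang S a -> tang S d -> sur S (zero S) (circ S a +' d) ->
                 sur S (neg S d) (circ S a)).
  { intros a d Ha Hd H. unfold circ in *.
    destruct (classic (d = a)) as [->|Hda].
    - destruct (classic (a = neg S a)) as [Haa|Haa].
      + rewrite <- Haa in *.
        assert (H11 : one S = neg S (one S)).
        { destruct (classic (one S = neg S (one S))) as [E|E]; [exact E|exfalso].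
          assert (T2 : tang S (one S +' one S)) by (apply Hmeta; auto).
          assert (T3 : tang S (act S a (one S +' one S))) by (apply HmulT; auto).
          rewrite (Hactadd a _ _ Ha), Hact1r in T3 by auto.
          apply (Hnotcirc _ a T3). unfold circ. rewrite <- Haa. reflexivity. }
        assert (Nid : forall x, neg S x = x).
        { intro x. rewrite <- (Hact1l x).
          destruct (Hactneg (one S) x Hone) as [E1 _]. rewrite E1, <- H11. reflexivity. }
        assert (Es : forall b, tang S b ->
                  act S b (one S +' one S +' one S) = b +' b +' b).
        { intros b Hb. rewrite !(Hactadd b _ _ Hb), !Hact1r by auto. reflexivity. }
        destruct (Hdec (one S +' one S +' one S)) as [Hs0|[Hst|[p [q [Hp [Hq Hpq]]]]]].
        * apply (Htrans _ (zero S)).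
          -- pose proof (Hi a a) as Hia. unfold circ in Hia. rewrite Nid, Hassoc in Hia.
             rewrite <- Es, Hs0, Hact0 in Hia by auto. exact Hia.
          -- pose proof (Z0c a) as Hz'. unfold circ in Hz'. rewrite Nid in Hz'. exact Hz'.
        * exfalso. apply (N0T (a +' a +' a)); auto.
          rewrite <- Es by auto. apply HmulT; auto.
        * assert (Hq' : q = p).
          { destruct (classic (q = neg S p)) as [E|E]. rewrite E, Nid; auto.
            exfalso. apply (N0T (a +' a +' a)); auto.
            rewrite <- Es by auto. apply HmulT; auto. rewrite Hpq. apply Hmeta; auto. }
          subst q.
          destruct (classic (p = one S)) as [Hp1|Hp1].
          -- subst p. pose proof (Hi a a) as Hia. unfold circ in Hia. rewrite Nid, Hassoc in Hia.
             rewrite <- Es, Hpq, (Hactadd a _ _ Ha), Hact1r in Hia by auto. exact Hia.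
          -- exfalso.
             assert (Tr : tang S (one S +' p)) by (apply Hmeta; auto; rewrite Nid; auto).
             destruct (classic (p = one S +' p)) as [Hr|Hr].
             ++ assert (Hr1 : one S +' p = p) by auto.
                assert (E5 : one S +' one S +' one S +' p = p).
                { rewrite <- !Hassoc. rewrite !Hr1. reflexivity. }
                rewrite Hpq in E5.
                pose proof (Es p Hp) as Ep. rewrite Hpq, E5 in Ep.
                rewrite (Hactadd p _ _ Hp) in Ep.
                apply (Hnotcirc p (act S p p) Hp). unfold circ. rewrite Nid. auto.
             ++ assert (Tf : tang S (one S +' p +' p)) by (apply Hmeta; auto; rewrite Nid; auto).
                rewrite <- Hassoc, <- Hpq in Tf.
                apply (Hnotcirc _ (one S +' one S) Tf). unfold circ. rewrite Nid.
                rewrite !Hassoc. reflexivity.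
      + assert (Hx : tang S (a +' a)) by (apply Hmeta; auto).
        assert (E : a +' neg S a +' a = (a +' a) +' neg S a).
        { rewrite <- Hassoc, (Hcomm (neg S a) a), Hassoc. reflexivity. }
        rewrite E in H.
        destruct (classic (neg S a = neg S (a +' a))) as [Hx2|Hx2].
        * rewrite Hnadd in Hx2.
          assert (E2 : neg S a +' (a +' neg S a) = a +' neg S a).
          { rewrite Hassoc, (Hcomm (neg S a) a), <- Hassoc, <- Hx2. reflexivity. }
          rewrite <- E2. apply Hi.
        * exfalso. exact (N0T _ (Hmeta _ _ Hx (Hnt a Ha) Hx2) H).
    - assert (He : tang S (neg S a +' d)).
      { apply Hmeta; auto. rewrite Hnn; auto. }
      rewrite <- Hassoc in H.
      destruct (classic (neg S a +' d = neg S a)) as [He2|He2].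
      + assert (E3 : a +' neg S d = a).
        { pose proof (f_equal (neg S) He2) as H0. rewrite Hnadd, !Hnn in H0. exact H0. }
        assert (E2 : neg S d +' (a +' neg S a) = a +' neg S a).
        { rewrite Hassoc, (Hcomm (neg S d) a), E3. reflexivity. }
        rewrite <- E2. apply Hi.
      + exfalso. exact (N0T _ (Hmeta a _ Ha He He2) H). }
  intros c d H. destruct (Hcl c) as [->|[Hc|[p [Hp ->]]]].
  - left. split; [apply Hrefl|]. rewrite Hzl in H. auto.
  - destruct (Hcl d) as [->|[Hd|[q [Hq ->]]]].
    + rewrite Hzr in H. left; split; auto.
    + right; left. rewrite (Hz c d Hc Hd H). apply Hrefl.
    + right; left. rewrite Hcomm in H. apply HL; auto.
  - destruct (Hcl d) as [->|[Hd|[q [Hq ->]]]].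
    + left; split; [apply Z0c|apply Hrefl].
    + right; right. apply HL; auto.
    + left; split; apply Z0c.
Qed.
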